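(* For every topological space $X$ the following are equivalent: (1) $\pi_0^{\mathrm{ps}}X$ is topological (its pseudotopology is the ultrafilter convergence of some topology); (2) $\pi_0^{\mathrm{ps}}X=\pi_0^{\mathrm{top}}X$ (the quotient pseudotopology on the set of path components equals the ultrafilter convergence of the quotient topology); (3) the natural projection $q_X\colon X\to\pi_0^{\mathrm{top}}X$ is biquotient.
   Context: For a set $X$, $U(X)$ is the set of ultrafilters on $X$, $\dot x$ the principal ultrafilter at $x$; for $f\colon X\to Y$, $f_*\mathscr F=\{S\subset Y:f^{-1}(S)\in\mathscr F\}$. A pseudotopological structure on $X$ is a relation $u\subset U(X)\times X$ containing all $(\dot x,x)$; write $\mathscr U\to x$. A topological space is regarded as a pseudotopological space via ultrafilter convergence. For a topological space $X$, $\pi_0^{\mathrm{ps}}X$ is the set of path components of $X$ with the final pseudotopology w.r.t. the projection $q_X$ (which assigns to each point its path component): $\mathscr U\to c$ iff $\mathscr U=\dot c$ or $\mathscr U=(q_X)_*\mathscr V$ and $c=q_X(x)$ for some ultrafilter $\mathscr V$ on $X$ converging to $x$. $\pi_0^{\mathrm{top}}X$ is the same set with the quotient topology w.r.t. $q_X$. A continuous surjection $f\colon X\to Y$ of topological spaces is biquotient if for every $y\in Y$ and every cover $\mathcal O$ of $f^{-1}(y)$ by open subsets of $X$, finitely many sets $f(O)$, $O\in\mathcal O$, cover some neighbourhood of $y$ in $Y$. *)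

(* Defs.v *)
From HB Require Import structures.
From mathcomp Require Import all_boot all_order all_algebra.
From mathcomp Require Import all_classical all_reals topology.
From mathcomp Require Import Rstruct Rstruct_topology.
From Stdlib Require Import Reals.
Set Implicit Arguments.
Unset Strict Implicit.
Unset Printing Implicit Defensive.
Local Open Scope classical_set_scope.

Definition path_component (X : topologicalType) (x : X) : set X :=
  [set y | exists f : R -> X,
     {within `[0%R, 1%R], continuous f} /\ f 0%R = x /\ f 1%R = y].

Definition pi0 (X : topologicalType) : Type :=
  {A : set X | exists x : X, A = path_component x}.

Definition qX (X : topologicalType) (x : X) : pi0 X :=
  exist (fun A : set X => exists x0 : X, A = path_component x0)
        (path_component x) (ex_intro _ x erefl).

Definition is_topology (Y : Type) (tau : set (set Y)) : Prop :=
  tau setT /\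
  (forall A B, tau A -> tau B -> tau (A `&` B)) /\
  (forall S : set (set Y), S `<=` tau -> tau (\bigcup_(A in S) A)).

Definition top_conv (Y : Type) (tau : set (set Y)) (U : set_system Y) (y : Y)
  : Prop := forall O, tau O -> O y -> U O.

Definition pi0_top_opens (X : topologicalType) : set (set (pi0 X)) :=
  [set O | open (qX (X:=X) @^-1` O)].

Definition pi0_ps_conv (X : topologicalType) (U : set_system (pi0 X)) (c : pi0 X)
  : Prop :=
  U = principal_filter c \/
  exists (V : set_system X) (x : X),
    UltraFilter V /\ V --> x /\ U = fmap (qX (X:=X)) V /\ c = qX x.

Definition pseudotop_is_topological (Y : Type)
  (conv : set_system Y -> Y -> Prop) : Prop :=
  exists tau : set (set Y), is_topology tau /\
    forall (U : set_system Y) (y : Y), UltraFilter U ->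
      (conv U y <-> top_conv tau U y).

Definition biquotient (X : topologicalType) (Y : Type) (tauY : set (set Y))
  (f : X -> Y) : Prop :=
  (forall W, tauY W -> open (f @^-1` W)) /\
  (forall y : Y, exists x : X, f x = y) /\
  (forall (y : Y) (C : set (set X)),
     (forall O, C O -> open O) ->
     f @^-1` [set y] `<=` \bigcup_(O in C) O ->
     exists F : set (set X), finite_set F /\ F `<=` C /\
       exists N : set Y, (exists W, tauY W /\ W y /\ W `<=` N) /\
         N `<=` \bigcup_(O in F) (f @` O)).

(* Main.v *)
Require Import Defs.
From HB Require Import structures.
From mathcomp Require Import all_boot all_order all_algebra.
From mathcomp Require Import all_classical all_reals topology.
Local Open Scope classical_set_scope.

Lemma filter_finI T (I : Type) (F : set I) (g : I -> set T) (U : set_system T) :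
  Filter U -> finite_set F -> (forall i, F i -> U (g i)) -> U (\bigcap_(i in F) g i).
Proof.
move=> FU /(@finite_fsetP {classic I}) [S ->] H.
apply: (@filter_bigI T {classic I} S g U FU) => i iS; apply: H; exact: iS.
Qed.

Lemma ultra_base T (B : set (set T)) : (exists P, B P) ->
  (forall P Q, B P -> B Q -> B (P `&` Q)) -> (forall P, B P -> P !=set0) ->
  exists U, UltraFilter U /\ B `<=` U.
Proof.
move=> [P0 BP0] BI Bne.
have FF : Filter (filter_from B id).
  apply: filter_from_filter; first by exists P0.
  by move=> P Q BP BQ; exists (P `&` Q) => //; exact: BI.
have PF : ProperFilter (filter_from B id) by apply: filter_from_proper.
have [U [UU sub]] := ultraFilterLemma PF.
by exists U; split => // P BP; apply: sub; exists P.
Qed.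

Lemma ultra_fmap T T' (f : T -> T') (V : set_system T) :
  UltraFilter V -> UltraFilter (fmap f V).
Proof.
move=> UV; split; first exact: (fmap_proper_filter _ (@ultra_proper _ _ UV)).
move=> G PG sub; rewrite predeqE => A; split; last exact: sub.
move=> GA; have [//|VnA] := in_ultra_setVsetC (f @^-1` A) UV.
have GnA : G (~` A) by apply: sub.
exfalso; apply: (filter_not_empty G); rewrite -(setICr A); exact: filterI.
Qed.

Lemma qX_surj (X : topologicalType) (c : pi0 X) : exists x, qX x = c.
Proof.
case: c => A [x eA]; exists x; rewrite /qX.
move: eA => eA; subst A; congr exist; exact: Prop_irrelevance.
Qed.

Lemma pi0_topology (X : topologicalType) : is_topology (@pi0_top_opens X).
Proof.
split; first by rewrite /pi0_top_opens /= preimage_setT; exact: openT.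
split.
  by move=> A B oA oB; rewrite /pi0_top_opens /= preimage_setI; exact: openI.
move=> S sub; rewrite /pi0_top_opens /= preimage_bigcup.
by apply: bigcup_open => i Si; apply: sub.
Qed.

Lemma ps_top (X : topologicalType) U c :
  @pi0_ps_conv X U c -> top_conv (@pi0_top_opens X) U c.
Proof.
case=> [->|[V [x [UV [Vx [-> ->]]]]]] O tO Oc.
  by move=> y ->.
by apply: Vx; apply: open_nbhs_nbhs; split.
Qed.

Lemma tau_sub (X : topologicalType) (tau : set (set (pi0 X))) :
  (forall (U : set_system (pi0 X)) (y : pi0 X), UltraFilter U ->
      (pi0_ps_conv U y <-> top_conv tau U y)) ->
  forall W, tau W -> pi0_top_opens W.
Proof.
move=> Heq W tW; rewrite /pi0_top_opens /= openE => x Wx.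
apply: contrapT => nW.
set A := (@qX X) @^-1` W.
pose B := [set P | exists N, nbhs x N /\ P = N `&` ~` A].
have [V [UV sub]] : exists V, UltraFilter V /\ B `<=` V.
  apply: ultra_base.
  - by exists (setT `&` ~` A); exists setT; split => //; exact: filterT.
  - move=> P Q [N1 [h1 ->]] [N2 [h2 ->]]; exists (N1 `&` N2); split.
      exact: filterI.
    by rewrite setIACA setIid.
  - move=> P [N [hN ->]]; apply: contrapT => hne; apply: nW.
    apply: filterS hN => y Ny; apply: contrapT => nAy; apply: hne; by exists y.
have Vx : V --> x.
  move=> N hN; apply: filterS (sub _ (ex_intro _ N (conj hN erefl))).
  by move=> y [].
have ps : pi0_ps_conv (fmap (@qX X) V) (qX x).
  by right; exists V, x.
have := (Heq _ _ (@ultra_fmap _ _ (@qX X) V UV)).1 ps W tW Wx => VA.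
have VnA : V (~` A).
  apply: filterS (sub _ (ex_intro _ setT (conj (@filterT _ _ _) erefl))).
  by move=> y [].
apply: (filter_not_empty V); rewrite -(setICr A); exact: filterI.
Qed.

Theorem proposition4p4 (X : topologicalType) :
  (pseudotop_is_topological (@pi0_ps_conv X) <->
   (forall (U : set_system (pi0 X)) (c : pi0 X), UltraFilter U ->
      (pi0_ps_conv U c <-> top_conv (@pi0_top_opens X) U c))) /\
  ((forall (U : set_system (pi0 X)) (c : pi0 X), UltraFilter U ->
      (pi0_ps_conv U c <-> top_conv (@pi0_top_opens X) U c)) <->
   biquotient (@pi0_top_opens X) (qX (X:=X))).
Proof.
split; split.
- move=> [tau [_ Heq]] U c UU; split; first exact: ps_top.
  move=> Ht; apply/(Heq _ _ UU) => O tO Oc.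
  exact: Ht (@tau_sub _ _ Heq _ tO) Oc.
- by move=> Heq; exists (@pi0_top_opens X); split => //; exact: pi0_topology.
- move=> Heq; split; first by [].
  split; first exact: qX_surj.
  move=> c C Copen Ccov; apply: contrapT => nF.
  have [tT [tI _]] := pi0_topology X.
  pose B := [set P | exists W F, pi0_top_opens W /\ W c /\ finite_set F /\
     F `<=` C /\ P = W `&` ~` (\bigcup_(O in F) (@qX X) @` O)].
  have [U [UU sub]] : exists U, UltraFilter U /\ B `<=` U.
    apply: ultra_base.
    - exists (setT `&` ~` (\bigcup_(O in set0) (@qX X) @` O)).
      exists setT, set0; split; first exact: tT.
      by split => //; split; [exact: finite_set0|split; [exact: sub0set|]].
    - move=> P Q [W1 [F1 [t1 [c1 [f1 [s1 ->]]]]]] [W2 [F2 [t2 [c2 [f2 [s2 ->]]]]]].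
      exists (W1 `&` W2), (F1 `|` F2); split; first exact: tI.
      split; first by split.
      split; first by rewrite finite_setU.
      split; first by move=> O [/s1|/s2].
      by rewrite bigcup_setU setCU setIACA.
    - move=> P [W [F [tW [Wc [fF [sF ->]]]]]]; apply: contrapT => hne; apply: nF.
      exists F; split => //; split => //; exists W; split; first by exists W; split => //; split => //.
      move=> d Wd; apply: contrapT => nd; apply: hne; by exists d.
  have Ht : top_conv (@pi0_top_opens X) U c.
    move=> O tO Oc.
    apply: filterS (sub _ (ex_intro _ O (ex_intro _ set0
      (conj tO (conj Oc (conj (finite_set0 _) (conj (sub0set _) erefl))))))).
    by move=> y [].
  have key : forall O, C O -> U (~` ((@qX X) @` O)).
    move=> O CO.
    have BO : B (setT `&` ~` (\bigcup_(O' in [set O]) (@qX X) @` O')).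
      exists setT, [set O]; split => //; split => //; split; first exact: finite_set1.
      by split => // O' ->.
    apply: filterS (sub _ BO) => d [_ nd] hd; apply: nd; exists O => //.
  have [x qx] := @qX_surj X c.
  case: ((Heq _ _ UU).2 Ht) => [Uc|[V [x' [UV [Vx' [UE cE]]]]]].
  + have [O CO Ox] := Ccov x qx.
    have := key O CO; rewrite Uc => /(_ c erefl); apply; by exists x.
  + have [O CO Ox'] := Ccov x' (esym cE).
    have := key O CO; rewrite UE => VnO; change (V ((@qX X) @^-1` (~` ((@qX X) @` O)))) in VnO.
    have VO : V O by apply: Vx'; apply: open_nbhs_nbhs; split => //; exact: Copen.
    have [y [Oy nOy]] := filter_ex (filterI VO VnO).
    by apply: nOy; exists y.
- move=> [_ [surj cov]] U c UU; split; first exact: ps_top.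
  move=> Ht.
  have [x [qx adh]] : exists x, qX x = c /\ forall N A, nbhs x N -> U A ->
      (N `&` (@qX X) @^-1` A) !=set0.
    apply: contrapT => hno.
    pose C := [set O : set X | open O /\ U (~` ((@qX X) @` O))].
    have Ccov : (@qX X) @^-1` [set c] `<=` \bigcup_(O in C) O.
      move=> y qy; apply: contrapT => ny; apply: hno; exists y; split => //.
      move=> N A hN UA; apply: contrapT => hne.
      move: hN; rewrite nbhsE => -[O [oO Oy] ON].
      apply: ny; exists O => //; split => //.
      apply: filterS UA => a Aa [o Oo qo]; apply: hne; exists o; split.
        exact: ON.
      by rewrite /preimage /= qo.
    have [F [fF [sF [N [[W [tW [Wc WN]]] NF]]]]] :=
      cov c C (fun O CO => CO.1) Ccov.
    have UW : U W by exact: Ht.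
    have UI : U (\bigcap_(O in F) ~` ((@qX X) @` O)).
      by apply: filter_finI => // O FO; exact: (sF _ FO).2.
    have [d [Wd Id]] := filter_ex (filterI UW UI).
    have [O FO Od] := NF d (WN d Wd).
    exact: Id O FO Od.
  pose B := [set P | exists N A, nbhs x N /\ U A /\ P = N `&` (@qX X) @^-1` A].
  have [V [UV sub]] : exists V, UltraFilter V /\ B `<=` V.
    apply: ultra_base.
    - by eexists; exists setT, setT; split; [exact: filterT | split; [exact: filterT|]].
    - move=> P Q [N1 [A1 [h1 [u1 ->]]]] [N2 [A2 [h2 [u2 ->]]]].
      exists (N1 `&` N2), (A1 `&` A2); split; first exact: filterI.
      split; first exact: filterI.
      by rewrite preimage_setI setIACA.
    - by move=> P [N [A [hN [UA ->]]]]; exact: adh.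
  right; exists V, x; split => //; split.
    move=> N hN; apply: filterS (sub _ (ex_intro _ N (ex_intro _ setT
      (conj hN (conj (@filterT _ _ _) erefl))))).
    by move=> y [].
  split => //.
  symmetry; apply: (max_filter (F:=U)).
  move=> A UA; change (V ((@qX X) @^-1` A)); apply: filterS (sub _ (ex_intro _ setT (ex_intro _ A
      (conj (@filterT _ _ _) (conj UA erefl))))).
  by move=> y [].
Qed.
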